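(* Let $n\ge1$, $a\in[-\infty,+\infty)$, $b\in(-\infty,+\infty]$ with $a\le b$, and $\mathbf y\in\mathbb R^n$. Let $\boldsymbol\theta^*$ be the unique minimizer of $\|\mathbf y-\mathbf v\|_2^2$ over $\mathbf v\in\mathcal S_n^\uparrow$, and $\boldsymbol\theta$ the unique minimizer of $\|\mathbf y-\mathbf v\|_2^2$ over $\mathbf v\in\mathcal S_n^\uparrow(a,b)$, where $\mathcal S_n^\uparrow(a,b)=\{\mathbf v\in\mathcal S_n^\uparrow: a\le v_1,\ v_n\le b\}$. Then $k(\boldsymbol\theta)\le k(\boldsymbol\theta^* )$.
   Context: $\mathcal S_n^\uparrow=\{\mathbf u\in\mathbb R^n:u_1\le\dots\le u_n\}$. For $\mathbf u\in\mathbb R^n$, $k(\mathbf u)=|\{u_1,\dots,u_n\}|$, the number of distinct values of $\mathbf u$. *)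

(* Defs.v *)
From HB Require Import structures.
From mathcomp Require Import all_boot all_order all_algebra.
Set Implicit Arguments. Unset Strict Implicit. Unset Printing Implicit Defensive.
Import Order.TTheory GRing.Theory Num.Theory.
Local Open Scope ring_scope.

Definition nondecr (R : realFieldType) (n : nat) (u : 'I_n -> R) : Prop :=
  forall i j : 'I_n, (i <= j)%N -> u i <= u j.

Definition kdist (R : realFieldType) (n : nat) (u : 'I_n -> R) : nat :=
  size (undup [seq u i | i <- enum 'I_n]).

Definition sqdist (R : realFieldType) (n : nat) (y v : 'I_n -> R) : R :=
  \sum_(i < n) (y i - v i) ^+ 2.

(* Extended bounds: a = None means a = -oo ; b = None means b = +oo. *)
Definition lower_ok (R : realFieldType) (a : option R) (x : R) : Prop :=
  match a with None => True | Some a' => a' <= x end.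
Definition upper_ok (R : realFieldType) (b : option R) (x : R) : Prop :=
  match b with None => True | Some b' => x <= b' end.
Definition bounds_le (R : realFieldType) (a b : option R) : Prop :=
  match a, b with Some a', Some b' => a' <= b' | _, _ => True end.

Definition nondecr_ab (R : realFieldType) (n : nat) (a b : option R)
    (v : 'I_n.+1 -> R) : Prop :=
  nondecr v /\ lower_ok a (v ord0) /\ upper_ok b (v ord_max).

Definition is_minimizer (R : realFieldType) (n : nat) (C : ('I_n -> R) -> Prop)
    (y t : 'I_n -> R) : Prop :=
  C t /\ forall v, C v -> sqdist y t <= sqdist y v.

(* Main.v *)
Require Import Defs.
From HB Require Import structures.
From mathcomp Require Import all_boot all_order all_algebra.
From mathcomp Require Import ring lra.
Import Order.TTheory GRing.Theory Num.Theory.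
Local Open Scope ring_scope.

Ltac splitifs :=
  repeat match goal with
  | |- context [if ?c then _ else _] =>
      case: (ltP _ _)  || fail
  end.
Ltac noif t := lazymatch t with context [if _ then _ else _] => fail | _ => idtac end.
Ltac ifs := repeat match goal with
  | |- context [if ?x < ?y then _ else _] => noif x; noif y; case: (ltP x y) => ?
  end.

Section Aux.
Context {R : realFieldType}.

Definition lo (a : option R) (x : R) : R :=
  match a with None => x | Some a' => if x < a' then a' else x end.
Definition hi (b : option R) (x : R) : R :=
  match b with None => x | Some b' => if b' < x then b' else x end.
Definition clip a b x := hi b (lo a x).

Lemma clip_mono a b x z : x <= z -> clip a b x <= clip a b z.
Proof.
rewrite /clip /hi /lo => h; case: a => [a'|]; case: b => [b'|] /=;
ifs; lra.
Qed.

Lemma clip_lip a b x z : x <= z -> x - clip a b x <= z - clip a b z.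
Proof.
rewrite /clip /hi /lo => h; case: a => [a'|]; case: b => [b'|] /=;
ifs; lra.
Qed.

Lemma clip_ok a b x : bounds_le a b ->
  lower_ok a (clip a b x) /\ upper_ok b (clip a b x).
Proof.
rewrite /clip /hi /lo /bounds_le /lower_ok /upper_ok;
case: a => [a'|]; case: b => [b'|] //= h;
ifs; split; lra.
Qed.

Lemma clip_sign a b x w : lower_ok a w -> upper_ok b w ->
  (x - clip a b x) * (w - clip a b x) <= 0.
Proof.
rewrite /clip /hi /lo /lower_ok /upper_ok;
case: a => [a'|]; case: b => [b'|] //= h1 h2;
ifs; nra.
Qed.

Lemma sq_expand n (p q : 'I_n -> R) :
  \sum_(i < n) (p i - q i) ^+ 2 =
  \sum_(i < n) p i ^+ 2 - 2 * \sum_(i < n) p i * q i + \sum_(i < n) q i ^+ 2.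
Proof.
rewrite mulr_sumr -sumrN -!big_split /=; apply: eq_bigr => i _; ring.
Qed.

Lemma sum_le0 n (F : 'I_n -> R) : (forall i, F i <= 0) -> \sum_(i < n) F i <= 0.
Proof.
move=> h; rewrite -oppr_ge0 -sumrN; apply: sumr_ge0 => i _; rewrite oppr_ge0; exact: h.
Qed.

Lemma var_ineq n (y ts : 'I_n -> R) :
  is_minimizer (@nondecr R n) y ts ->
  forall u, nondecr u -> \sum_(i < n) (y i - ts i) * (u i - ts i) <= 0.
Proof.
move=> [hts hmin] u hu.
set P := \sum_(i < n) _.
set Q := \sum_(i < n) (u i - ts i) ^+ 2.
have hQ : 0 <= Q by apply: sumr_ge0 => i _; exact: sqr_ge0.
rewrite leNgt; apply/negP => hP.
set t := P / (P + Q).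
have hPQ : 0 < P + Q by lra.
have ht0 : 0 <= t by apply: divr_ge0; lra.
have ht1 : t <= 1 by rewrite ler_pdivrMr //; lra.
have htPQ : t * (P + Q) = P by rewrite /t mulfVK //; lra.
pose w := fun i => ts i + t * (u i - ts i).
have hw : nondecr w.
  move=> i j hij; rewrite /w.
  have := hts i j hij; have := hu i j hij; nra.
have := hmin w hw; rewrite /sqdist.
have -> : \sum_(i < n) (y i - w i) ^+ 2 =
  \sum_(i < n) ((y i - ts i) - t * (u i - ts i)) ^+ 2.
  by apply: eq_bigr => i _; rewrite /w; ring.
rewrite (sq_expand n (fun i => y i - ts i) (fun i => t * (u i - ts i))) /=.
have -> : \sum_(i < n) (y i - ts i) * (t * (u i - ts i)) = t * P.
  by rewrite /P mulr_sumr; apply: eq_bigr => i _; ring.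
have -> : \sum_(i < n) (t * (u i - ts i)) ^+ 2 = t ^+ 2 * Q.
  by rewrite /Q mulr_sumr; apply: eq_bigr => i _; ring.
have -> : \sum_(i < n) (y i - ts i) ^+ 2 = sqdist y ts by [].
move=> h.
have h2 : 0 <= t * (t * Q - 2 * P) by rewrite -subr_ge0 in h; nra.
have htp : 0 < t by rewrite /t divr_gt0.
have h3 : 0 <= t * Q - 2 * P by rewrite pmulr_rge0 in h2.
nra.
Qed.

Lemma kdist_comp n (u : 'I_n -> R) (f : R -> R) :
  (kdist (fun i => f (u i)) <= kdist u)%N.
Proof.
rewrite /kdist.
apply: leq_trans (_ : (size (map f (undup [seq u i | i <- enum 'I_n])) <= _)%N);
  last by rewrite size_map.
apply: uniq_leq_size; first exact: undup_uniq.
move=> x; rewrite mem_undup => /mapP [i hi ->].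
apply/mapP; exists (u i) => //; rewrite mem_undup; apply/mapP; by exists i.
Qed.

Lemma vb m (a b : option R) (v : 'I_m.+1 -> R) : nondecr_ab a b v -> forall i,
    lower_ok a (v i) /\ upper_ok b (v i).
Proof.
  move=> [hv [hlo hup]] i; split.
    move: hlo; rewrite /lower_ok; case: a => [a'|] //= h.
    apply: le_trans h _; apply: hv; exact: leq0n.
  move: hup; rewrite /upper_ok; case: b => [b'|] //= h.
  apply: le_trans _ h; apply: hv; by rewrite -ltnS ltn_ord.
Qed.

End Aux.

Theorem mainTheorem4 (R : realFieldType) (m : nat) (a b : option R)
    (y thetastar theta : 'I_m.+1 -> R) :
  bounds_le a b ->
  is_minimizer (@nondecr R m.+1) y thetastar ->
  is_minimizer (nondecr_ab a b) y theta ->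
  (kdist theta <= kdist thetastar)%N.
Proof.
move=> hab hts [hth hthmin].
have VI := @var_ineq R _ _ _ hts.
have hts_nd := hts.1.
pose c := fun i => clip a b (thetastar i).
have hvb := @vb R m a b.
have G : forall v : 'I_m.+1 -> R, nondecr_ab a b v ->
    \sum_(i < m.+1) (y i - c i) * (v i - c i) <= 0.
  move=> v hv.
  pose u := fun i => v i + (thetastar i - c i).
  have hu : nondecr u.
    move=> i j hij; rewrite /u /c.
    have := hv.1 i j hij; have := clip_lip a b _ _ (hts_nd i j hij); lra.
  have -> : \sum_(i < m.+1) (y i - c i) * (v i - c i) =
      \sum_(i < m.+1) ((y i - thetastar i) * (u i - thetastar i)
                       + (thetastar i - c i) * (v i - c i)).
    by apply: eq_bigr => i _; rewrite /u; ring.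
  rewrite big_split /=.
  have h1 := VI u hu.
  have h2 : \sum_(i < m.+1) (thetastar i - c i) * (v i - c i) <= 0.
    apply: sum_le0 => i; have [hl hh] := hvb v hv i; exact: clip_sign.
  lra.
have hc : nondecr_ab a b c.
  split; first by move=> i j hij; apply: clip_mono; exact: hts_nd.
  split; [exact: (clip_ok _ _ _ hab).1 | exact: (clip_ok _ _ _ hab).2].
have hle := hthmin c hc.
have Geq := G theta hth.
have hsum : \sum_(i < m.+1) (theta i - c i) ^+ 2 <= 0.
  move: hle; rewrite /sqdist.
  have -> : \sum_(i < m.+1) (y i - theta i) ^+ 2 =
      \sum_(i < m.+1) ((y i - c i) - (theta i - c i)) ^+ 2.
    by apply: eq_bigr => i _; ring.
  rewrite sq_expand; lra.
have heq : forall i, theta i = c i.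
  move=> i.
  have : (theta i - c i) ^+ 2 <= 0.
    apply: le_trans hsum; rewrite (bigD1 i) //= lerDl.
    by apply: sumr_ge0 => j _; exact: sqr_ge0.
  move=> h; apply/eqP; rewrite -subr_eq0 -sqrf_eq0 eq_le h sqr_ge0 //.
rewrite (_ : kdist theta = kdist c); first exact: kdist_comp.
by rewrite /kdist (eq_map heq).
Qed.
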